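(* Let $\langle A;\cdot\rangle$ be a semigroup which is an Abelian algebra and satisfies condition $( * )$. Then: (1) the relations $X$ and $Y$ restricted to $A\cdot A$ are equivalence relations on $A\cdot A$; (2) for all idempotents $e,f\in A$ we have $\Phi_e\cap\Psi_f=\{ef\}$, and $ef$ is an idempotent; (3) for every $a\in A\cdot A$ there exist idempotents $e,f\in A$ such that $a\in X_e\cap Y_f$, and $X_e\cap Y_f=Z_{ef}$.
   Context: $A\cdot A=\{xy\mid x,y\in A\}$; an idempotent is $e$ with $ee=e$. Condition $( * )$: either ($bcA=bA$ and $Abc=Ac$ for all $b,c\in A$), or the set $A\cdot A$ is finite. Relations on $A$: $x\,\Phi\,y\iff\exists z\,(xz=yz)$; $x\,\Psi\,y\iff\exists z\,(zx=zy)$; $x\,X\,y\iff\exists z\,(zx=x\wedge zy=y\wedge z^2=z)$; $x\,Y\,y\iff\exists z\,(xz=x\wedge yz=y\wedge z^2=z)$; $x\,Z\,y\iff (x\,X\,y\wedge x\,Y\,y)$. For an equivalence (or relation) $\Theta$ and $a\in A\cdot A$, $\Theta_a$ denotes $\{x\in A\cdot A\mid x\,\Theta\,a\}$. A polynomial operation of an algebra is an operation obtained from a term by substituting elements of the algebra for some of its variables. An algebra is called Abelian if for every polynomial operation $t(x,y_1,\ldots,y_n)$ and all elements $u,v,c_1,\ldots,c_n,d_1,\ldots,d_n$ of the algebra, $t(u,c_1,\ldots,c_n)=t(u,d_1,\ldots,d_n)$ implies $t(v,c_1,\ldots,c_n)=t(v,d_1,\ldots,d_n)$. *)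

(* Defs.v *)
From Stdlib Require Import List.

Section Semigroup.
Variable A : Type.
Variable mul : A -> A -> A.

(* Terms of the semigroup signature with variables indexed by nat and
   constants from A; evaluating a term with some variables substituted by
   constants gives the polynomial operations. *)
Inductive term : Type :=
| Var : nat -> term
| Cst : A -> term
| Mul : term -> term -> term.

Fixpoint eval (env : nat -> A) (t : term) : A :=
  match t with
  | Var n => env n
  | Cst a => a
  | Mul t1 t2 => mul (eval env t1) (eval env t2)
  end.

Definition env (x : A) (ys : nat -> A) : nat -> A :=
  fun n => match n with O => x | S i => ys i end.

Definition abelian : Prop :=
  forall (t : term) (u v : A) (c d : nat -> A),
    eval (env u c) t = eval (env u d) t ->
    eval (env v c) t = eval (env v d) t.

Definition associative : Prop :=
  forall x y z : A, mul (mul x y) z = mul x (mul y z).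

Definition inAA (x : A) : Prop := exists y z : A, x = mul y z.

Definition idempotent (e : A) : Prop := mul e e = e.

Definition cond_star : Prop :=
  (forall b c : A,
      (forall x, (exists a, x = mul (mul b c) a) <-> (exists a, x = mul b a)) /\
      (forall x, (exists a, x = mul (mul a b) c) <-> (exists a, x = mul a c)))
  \/ (exists l : list A, forall x, inAA x -> In x l).

Definition relPhi (x y : A) : Prop := exists z, mul x z = mul y z.
Definition relPsi (x y : A) : Prop := exists z, mul z x = mul z y.
Definition relX (x y : A) : Prop :=
  exists z, mul z x = x /\ mul z y = y /\ mul z z = z.
Definition relY (x y : A) : Prop :=
  exists z, mul x z = x /\ mul y z = y /\ mul z z = z.
Definition relZ (x y : A) : Prop := relX x y /\ relY x y.

Definition equiv_on_AA (R : A -> A -> Prop) : Prop :=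
  (forall x, inAA x -> R x x) /\
  (forall x y, inAA x -> inAA y -> R x y -> R y x) /\
  (forall x y z, inAA x -> inAA y -> inAA z -> R x y -> R y z -> R x z).

(* Theta_a = { x in A.A | x Theta a } *)
Definition cls (R : A -> A -> Prop) (a : A) (x : A) : Prop := inAA x /\ R x a.

End Semigroup.
Arguments associative {A}. Arguments abelian {A}. Arguments cond_star {A}. Arguments inAA {A}. Arguments idempotent {A}. Arguments relPhi {A}. Arguments relPsi {A}. Arguments relX {A}. Arguments relY {A}. Arguments relZ {A}. Arguments equiv_on_AA {A}. Arguments cls {A}. Arguments eval {A}. Arguments env {A}.

Arguments Var {A}.
Arguments Cst {A}.
Arguments Mul {A}.

(* Main.v *)
Require Import Defs.
From Stdlib Require Import List Lia Classical.

Lemma rtrans (A : Type) (mul : A -> A -> A) (Habel : abelian mul) :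
  forall c d u v, mul c u = mul d u -> mul c v = mul d v.
Proof.
  intros c d u v H.
  exact (Habel (Mul (Var 1) (Var 0)) u v (fun _ => c) (fun _ => d) H).
Qed.

Lemma ltrans (A : Type) (mul : A -> A -> A) (Habel : abelian mul) :
  forall c d u v, mul u c = mul u d -> mul v c = mul v d.
Proof.
  intros c d u v H.
  exact (Habel (Mul (Var 0) (Var 1)) u v (fun _ => c) (fun _ => d) H).
Qed.

Lemma lkey (A : Type) (mul : A -> A -> A) (Hassoc : associative mul) (Habel : abelian mul) :
  forall a e u, inAA mul a -> mul (mul e a) u = mul a u -> mul e a = a.
Proof.
  intros a e u [y [z ->]] H.
  rewrite !Hassoc in H.
  assert (H' : mul (mul e y) (mul z u) = mul y (mul z u)) by (rewrite Hassoc; exact H).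
  rewrite <- Hassoc.
  exact (rtrans _ _ Habel _ _ _ z H').
Qed.

Lemma rkey (A : Type) (mul : A -> A -> A) (Hassoc : associative mul) (Habel : abelian mul) :
  forall a q w, inAA mul a -> mul w a = mul w (mul a q) -> a = mul a q.
Proof.
  intros a q w [y [z ->]] H.
  assert (H' : mul (mul w y) z = mul (mul w y) (mul z q)) by (rewrite !Hassoc; rewrite !Hassoc in H; exact H).
  rewrite Hassoc.
  exact (ltrans _ _ Habel _ _ _ y H').
Qed.

Fixpoint pw (A : Type) (mul : A -> A -> A) (a : A) (n : nat) : A :=
  match n with O => a | S n => mul (pw A mul a n) a end.

Lemma pw_add (A : Type) (mul : A -> A -> A) (Hassoc : associative mul) a :
  forall m n, mul (pw A mul a n) (pw A mul a m) = pw A mul a (n + m + 1).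
Proof.
  induction m; intros n; simpl.
  - replace (n + 0 + 1) with (S n) by lia. reflexivity.
  - rewrite <- Hassoc, IHm. replace (n + S m + 1) with (S (n + m + 1)) by lia. reflexivity.
Qed.

Lemma pw_comm (A : Type) (mul : A -> A -> A) (Hassoc : associative mul) a n :
  mul (pw A mul a n) a = mul a (pw A mul a n).
Proof.
  pose proof (pw_add A mul Hassoc a 0 n) as H1. pose proof (pw_add A mul Hassoc a n 0) as H2.
  simpl in H1, H2. rewrite H1, H2. f_equal. lia.
Qed.

Lemma pw_AA (A : Type) (mul : A -> A -> A) a n : inAA mul a -> inAA mul (pw A mul a n).
Proof. destruct n; simpl; [auto | intros _; eexists; eexists; reflexivity]. Qed.

Lemma exists_idem (A : Type) (mul : A -> A -> A)
  (Hassoc : associative mul) (Habel : abelian mul) (Hstar : cond_star mul) :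
  forall a, inAA mul a -> exists e, mul e e = e /\ mul e a = a /\ mul a e = a.
Proof.
  intros a Ha. destruct Hstar as [H1 | [l Hl]].
  - destruct Ha as [b [c Hbc]].
    assert (Ha1 : exists t, a = mul a t).
    { destruct (proj1 (H1 b c) a) as [_ h]. destruct h as [t ht]. exists c; auto.
      exists t. rewrite Hbc at 2. exact ht. }
    assert (Ha2 : exists t, a = mul t a).
    { destruct (proj2 (H1 b c) a) as [_ h]. destruct h as [t ht]. exists b; auto.
      exists t. rewrite Hbc at 2. rewrite <- Hassoc. exact ht. }
    destruct (proj1 (H1 a a) a) as [_ h]. destruct (h Ha1) as [u Hu].
    destruct (proj2 (H1 a a) a) as [_ h2]. destruct (h2 Ha2) as [v Hv].
    assert (Hu' : a = mul a (mul a u)) by (rewrite <- Hassoc; exact Hu).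
    assert (E : mul a u = mul v a).
    { rewrite Hv at 1. rewrite !Hassoc, <- Hu'. reflexivity. }
    exists (mul a u). split; [|split].
    + rewrite E at 1. rewrite !Hassoc, <- Hu'. symmetry; exact E.
    + rewrite E. symmetry; exact Hv.
    + symmetry; exact Hu'.
  - set (p := pw A mul a).
    assert (Hd : exists i j, i < j /\ p i = p j).
    { apply NNPP. intros Hn.
      assert (Hinj : forall i j, p i = p j -> i = j).
      { intros i j Hij. destruct (PeanoNat.Nat.lt_trichotomy i j) as [h|[h|h]]; auto.
        - exfalso; apply Hn; eauto.
        - exfalso; apply Hn; exists j, i; auto. }
      assert (ND : NoDup (map p (seq 0 (S (length l))))).
      { apply NoDup_map_NoDup_ForallPairs; [|apply seq_NoDup].
        intros x y _ _; apply Hinj. }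
      assert (Inc : incl (map p (seq 0 (S (length l)))) l).
      { intros x Hx. apply in_map_iff in Hx. destruct Hx as [n [<- _]].
        apply Hl. apply pw_AA; auto. }
      pose proof (NoDup_incl_length ND Inc). rewrite length_map, length_seq in H. lia. }
    destruct Hd as [i [j [Hij Hpe]]].
    set (q := p (j - i - 1)).
    assert (Hmul : forall n m, mul (p n) (p m) = p (n + m + 1)).
    { intros n m. unfold p. apply pw_add; auto. }
    assert (Hpa : forall m, mul a (p m) = p (S m)).
    { intros m. change (mul (p 0) (p m) = p (S m)). rewrite Hmul. f_equal; lia. }
    assert (Haq : a = mul a q).
    { destruct i as [|i].
      - assert (Hpj : p j = mul a q).
        { unfold q. rewrite Hpa. f_equal. lia. }
        transitivity (p j); [exact Hpe | exact Hpj].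
      - assert (Hw : mul (p i) a = mul (p i) (mul a q)).
        { change (mul (p i) a) with (p (S i)). rewrite Hpe. unfold q.
          rewrite Hpa, Hmul. f_equal. lia. }
        exact (rkey A mul Hassoc Habel a q (p i) Ha Hw). }
    assert (Hpq : forall n, mul (p n) q = p n).
    { induction n.
      - symmetry; exact Haq.
      - change (mul (mul (p n) a) q = mul (p n) a). rewrite Hassoc, <- Haq. reflexivity. }
    exists q. split; [|split].
    + apply Hpq.
    + unfold q, p. rewrite pw_comm by auto. fold p. fold q. symmetry; exact Haq.
    + symmetry; exact Haq.
Qed.

Theorem mainTheorem13 (A : Type) (mul : A -> A -> A)
  (Hassoc : associative mul) (Habel : abelian mul) (Hstar : cond_star mul) :
  (equiv_on_AA mul (relX mul) /\ equiv_on_AA mul (relY mul)) /\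
  (forall e f : A, idempotent mul e -> idempotent mul f ->
     (forall x, (cls mul (relPhi mul) e x /\ cls mul (relPsi mul) f x)
                <-> x = mul e f) /\
     idempotent mul (mul e f)) /\
  (forall a : A, inAA mul a ->
     exists e f : A, idempotent mul e /\ idempotent mul f /\
       cls mul (relX mul) e a /\ cls mul (relY mul) f a /\
       (forall x, (cls mul (relX mul) e x /\ cls mul (relY mul) f x)
                  <-> cls mul (relZ mul) (mul e f) x)).
Proof.
  pose proof (rtrans A mul Habel) as R.
  pose proof (ltrans A mul Habel) as L.
  pose proof (exists_idem A mul Hassoc Habel Hstar) as EI.
  assert (P2 : forall e f x, idempotent mul e -> idempotent mul f ->
            cls mul (relPhi mul) e x -> cls mul (relPsi mul) f x -> x = mul e f).
  { intros e f x He Hf [Hx [z Hz]] [_ [w Hw]].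
    assert (Hxe : mul x e = e) by (rewrite (R _ _ _ e Hz); exact He).
    assert (Hxx : mul x x = x).
    { apply (lkey A mul Hassoc Habel x x e Hx). rewrite Hassoc, Hxe. exact Hxe. }
    rewrite <- Hxx at 1. rewrite (L _ _ _ x Hw). exact (R _ _ _ f Hz). }
  split; [split|split].
  - split; [|split].
    + intros x Hx. destruct (EI x Hx) as [e [He [Hex _]]]. exists e; auto.
    + intros x y _ _ [z [h1 [h2 h3]]]. exists z; auto.
    + intros x y z _ _ _ [z1 [a1 [a2 a3]]] [z2 [b1 [b2 b3]]].
      exists z1. repeat split; auto.
      assert (E : mul z1 y = mul z2 y) by congruence.
      rewrite (R _ _ _ z E). exact b2.
  - split; [|split].
    + intros x Hx. destruct (EI x Hx) as [e [He [_ Hxe]]]. exists e; auto.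
    + intros x y _ _ [z [h1 [h2 h3]]]. exists z; auto.
    + intros x y z _ _ _ [z1 [a1 [a2 a3]]] [z2 [b1 [b2 b3]]].
      exists z1. repeat split; auto.
      assert (E : mul y z1 = mul y z2) by congruence.
      rewrite (L _ _ _ z E). exact b2.
  - intros e f He Hf.
    assert (Hin1 : cls mul (relPhi mul) e (mul e f)).
    { split; [eexists; eexists; reflexivity|]. exists f. rewrite Hassoc, Hf. reflexivity. }
    assert (Hin2 : cls mul (relPsi mul) f (mul e f)).
    { split; [eexists; eexists; reflexivity|]. exists e. rewrite <- Hassoc, He. reflexivity. }
    split.
    + intros x; split.
      * intros [h1 h2]. exact (P2 e f x He Hf h1 h2).
      * intros ->. auto.
    +
      destruct Hin1 as [Hx [z Hz]].
      assert (Hxe : mul (mul e f) e = e) by (rewrite (R _ _ _ e Hz); exact He).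
      apply (lkey A mul Hassoc Habel (mul e f) (mul e f) e Hx).
      rewrite Hassoc, Hxe. exact Hxe.
  - intros a Ha. destruct (EI a Ha) as [e [He [Hea Hae]]].
    exists e, e. split; [exact He|split; [exact He|split; [|split]]].
    + split; auto. exists e; auto.
    + split; auto. exists e; auto.
    + intros x; split.
      * intros [[Hx [z1 [a1 [a2 a3]]]] [_ [z2 [b1 [b2 b3]]]]].
        split; auto. split.
        -- exists z1. repeat split; auto. rewrite <- Hassoc, a2. reflexivity.
        -- exists z2. repeat split; auto. rewrite Hassoc, b2. reflexivity.
      * intros [Hx [[z1 [a1 [a2 a3]]] [z2 [b1 [b2 b3]]]]].
        split; split; auto.
        -- exists z1. repeat split; auto.
           rewrite <- Hassoc in a2.
           pose proof (R _ _ _ e a2) as h. rewrite He, Hassoc, He in h. exact h.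
        -- exists z2. repeat split; auto.
           rewrite Hassoc in b2.
           pose proof (L _ _ _ e b2) as h. rewrite <- Hassoc, He in h. exact h.
Qed.
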